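(* Let $\Omega\subset\mathbb{R}^d$ be open, $k\in\mathbb{N}\cup\{\infty\}$, $E$ a non-trivial locally convex Hausdorff space over $\mathbb{K}$, $\mathcal{FV}(\Omega)$ a dom-space such that the inclusion $I\colon\mathcal{FV}(\Omega)\to\mathcal{CW}^k(\Omega)$, $f\mapsto f$, is (well-defined and) continuous. If $\mathcal{FV}(\Omega)$ is barrelled, then for all $u\in\mathcal{FV}(\Omega)\varepsilon E$ we have $S(u)\in\mathcal{C}^k(\Omega,E)$ and $(\partial^\beta)^E S(u)(x)=u(\delta_x\circ(\partial^\beta)^{\mathbb{K}})$ for all $\beta\in\mathbb{N}_0^d$ with $|\beta|\le k$ and all $x\in\Omega$.
   Context: $\mathbb{K}\in\{\mathbb{R},\mathbb{C}\}$. For $f\colon\Omega\to E$, $(\partial^{e_n})^E f(x):=\lim_{h\to0}\frac{f(x+he_n)-f(x)}{h}$ in $E$; $f$ is $\mathcal{C}^1$ if these exist and are continuous; $f$ is $\mathcal{C}^k$ if it is $\mathcal{C}^1$ with all first partial derivatives $\mathcal{C}^{k-1}$ ($\mathcal{C}^0$ = continuous), $\mathcal{C}^\infty$ if $\mathcal{C}^k$ for all $k$; $(\partial^\beta)^E:=(\partial^{e_1})^{\beta_1}\cdots(\partial^{e_d})^{\beta_d}$, $|\beta|=\sum\beta_i$. $\mathcal{CW}^k(\Omega)$ is $\mathcal{C}^k(\Omega,\mathbb{K})$ with the topology of uniform convergence of all partial derivatives of order $\le k$ on compact subsets of $\Omega$. Framework: $J,M$ non-empty index sets, $(\omega_m)_{m\in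 M}$ non-empty sets, $\nu_{j,m}\colon\omega_m\to[0,\infty)$ such that for all $m$, $x\in\omega_m$ some $\nu_{j,m}(x)>0$; $\operatorname{AP}(\Omega)\subset\mathbb{K}^\Omega$ a linear subspace; $T_m\colon\operatorname{dom}T_m\to\mathbb{K}^{\omega_m}$ linear maps on linear subspaces of $\mathbb{K}^\Omega$; $\mathcal{FV}(\Omega):=\{f\in\operatorname{AP}(\Omega)\cap\bigcap_m\operatorname{dom}T_m: |f|_{j,m}:=\sup_{x\in\omega_m}|T_m(f)(x)|\nu_{j,m}(x)<\infty\ \forall j,m\}$ with these seminorms. It is a dom-space if it is Hausdorff, the seminorms are directed and every $\delta_x\colon f\mapsto f(x)$ belongs to $\mathcal{FV}(\Omega)'$. $\mathcal{FV}(\Omega)\varepsilon E$: continuous linear maps from $\mathcal{FV}(\Omega)'$ (topology of uniform convergence on absolutely convex compact sets) to $E$, with the topology of uniform convergence on equicontinuous sets; $S(u)(x):=u(\delta_x)$. $\delta_x\circ(\partial^\beta)^{\mathbb{K}}$ denotes $f\mapsto(\partial^\beta)^{\mathbb{K}}f(x)$ on $\mathcal{FV}(\Omega)$. *)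

(* Defs.v *)
From HB Require Import structures.
From mathcomp Require Import all_boot all_order all_algebra.
From mathcomp Require Import all_classical all_reals all_analysis.
From mathcomp Require Import complex.
Import Order.TTheory GRing.Theory Num.Theory.
Import numFieldNormedType.Exports.

Set Implicit Arguments.
Unset Strict Implicit.
Unset Printing Implicit Defensive.

Local Open Scope ring_scope.
Local Open Scope classical_set_scope.

Inductive natinf := NFin of nat | NInf.

Definition le_natinf (m : nat) (k : natinf) : Prop :=
  match k with NFin k' => (m <= k')%N | NInf => True end.

Section Defs.
(* R : the real numbers; K : the scalar field (R or C), with the embedding
   iota : R -> K and the (real-valued) absolute value nrm : K -> R. *)
Variables (R : realType) (K : numFieldType) (iota : R -> K) (nrm : K -> R).
Variable d : nat.
Local Notation V := 'rV[R]_d.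

(* A function defined on Om, extended by z outside Om (the values outside Om
   are never used since Om is open; this only serves to write f(x + h e_n)). *)
Definition ext (T : Type) (z : T) (Om : set V) (f : Om -> T) : V -> T :=
  fun y => match pselect (y \in Om) with
           | left h => f (SigSub h)
           | right _ => z end.
Arguments ext {T} z Om f.

Section Derivatives.
Variable W : tvsType K.

Definition dquot (n : 'I_d) (F : V -> W) (x : V) : R -> W :=
  fun h => (iota h)^-1 *: (F (x + h *: 'e_n) - F x).

Definition has_pd (n : 'I_d) (F : V -> W) (x : V) (v : W) : Prop :=
  dquot n F x @ 0^' --> v.

(* the partial derivative (as a value; meaningful when it exists, W Hausdorff) *)
Definition pd (n : 'I_d) (F : V -> W) : V -> W :=
  fun x => xget 0 [set v | has_pd n F x v].

Definition pdb (beta : 'I_d -> nat) (F : V -> W) : V -> W :=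
  foldr (fun i g => (fun G => iter (beta i) (pd i) (g G))) id (enum 'I_d) F.

(* C^k(Om, W) (for functions extended to V; only the values on Om matter) *)
Fixpoint Ck_nat (Om : set V) (k : nat) (F : V -> W) : Prop :=
  match k with
  | 0 => {within Om, continuous F}
  | k'.+1 => (forall (n : 'I_d) (x : V), Om x -> exists v, has_pd n F x v) /\
             (forall n : 'I_d, Ck_nat Om k' (pd n F))
  end.

Definition Ck (Om : set V) (k : natinf) (F : V -> W) : Prop :=
  match k with
  | NFin m => Ck_nat Om m F
  | NInf => forall m, Ck_nat Om m F
  end.

End Derivatives.

Definition mlen (beta : 'I_d -> nat) : nat := (\sum_(i < d) beta i)%N.

Section FV.
Variable Om : set V.
Local Notation Fn := (Om -> K).

Definition lcomb (a : K) (f g : Fn) : Fn := fun x => a * f x + g x.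

Local Unset Implicit Arguments.
Record FVdata := {
  Jt : Type;
  Mt : Type;
  om : Mt -> Type;
  nu : Jt -> forall m : Mt, om m -> R;
  AP : set Fn;
  domT : Mt -> set Fn;
  Top : forall m : Mt, Fn -> (om m -> K)
}.
Local Set Implicit Arguments.

Variable D : FVdata.

Definition lin_subspace (A : set Fn) : Prop :=
  A (fun _ => 0) /\ forall a f g, A f -> A g -> A (lcomb a f g).

Definition FV_framework : Prop :=
  inhabited (Jt D) /\ inhabited (Mt D) /\ (forall m, inhabited (om D m)) /\
  (forall j m x, 0 <= nu D j m x) /\
  (forall m x, exists j, 0 < nu D j m x) /\
  lin_subspace (AP D) /\
  (forall m, lin_subspace (domT D m)) /\
  (forall m a f g, domT D m f -> domT D m g ->
     Top D m (lcomb a f g) = (fun x => a * Top D m f x + Top D m g x)).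

Definition sn_vals (j : Jt D) (m : Mt D) (f : Fn) : set R :=
  range (fun x : om D m => nrm (Top D m f x) * nu D j m x).

Definition FV (f : Fn) : Prop :=
  AP D f /\ (forall m, domT D m f) /\
  (forall j m, has_ubound (sn_vals j m f)).

Definition snorm (j : Jt D) (m : Mt D) (f : Fn) : R := sup (sn_vals j m f).

Definition fsub (g f : Fn) : Fn := fun x => g x - f x.

Definition fv_nbhs (f : Fn) (U : set Fn) : Prop :=
  exists (n : nat) (F : 'I_n -> (Jt D * Mt D)) (e : R), 0 < e /\
    forall g, FV g -> (forall i, snorm (F i).1 (F i).2 (fsub g f) < e) -> U g.

Definition fv_open (U : set Fn) : Prop :=
  forall f, FV f -> U f -> fv_nbhs f U.

Definition fv_closed (A : set Fn) : Prop :=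
  A `<=` FV /\ fv_open (~` A).

Definition fv_compact (A : set Fn) : Prop :=
  A `<=` FV /\
  forall G : set (set Fn), (forall U, G U -> fv_open U) ->
    A `<=` \bigcup_(U in G) U ->
    exists (n : nat) (s : 'I_n -> set Fn),
      (forall i, G (s i)) /\ A `<=` \bigcup_(i in [set: 'I_n]) s i.

Definition fv_hausdorff : Prop :=
  forall f g, FV f -> FV g -> f <> g ->
    exists U U', fv_nbhs f U /\ fv_nbhs g U' /\
      forall h, FV h -> ~ (U h /\ U' h).

Definition fv_directed : Prop :=
  forall (j1 : Jt D) (m1 : Mt D) (j2 : Jt D) (m2 : Mt D),
    exists (j3 : Jt D) (m3 : Mt D) (C : R), 0 < C /\
      forall f, FV f -> Num.max (snorm j1 m1 f) (snorm j2 m2 f) <= C * snorm j3 m3 f.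

Definition abs_convex (A : set Fn) : Prop :=
  forall f g (a b : K), A f -> A g -> nrm a + nrm b <= 1 ->
    A (fun x => a * f x + b * g x).

Definition absorbing (A : set Fn) : Prop :=
  forall f, FV f -> exists r : R, 0 < r /\
    forall a : K, nrm a <= r -> A (fun x => a * f x).

Definition barrel (B : set Fn) : Prop :=
  B `<=` FV /\ fv_closed B /\ abs_convex B /\ absorbing B.

Definition barrelled : Prop :=
  forall B, barrel B -> fv_nbhs (fun _ => 0) B.

(* Elements of the dual FV(Om)': continuous linear functionals on FV(Om),
   represented by functions on K^Om normalized to be 0 outside FV(Om). *)
Definition restrFV (y : Fn -> K) : Fn -> K :=
  fun f => match pselect (FV f) with left _ => y f | right _ => 0 end.

Definition fv_linear_functional (y : Fn -> K) : Prop :=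
  forall a f g, FV f -> FV g -> y (lcomb a f g) = a * y f + y g.

Definition fv_continuous_functional (y : Fn -> K) : Prop :=
  forall f, FV f -> forall e : R, 0 < e ->
    fv_nbhs f (fun g => nrm (y g - y f) < e).

Definition dual (y : Fn -> K) : Prop :=
  fv_linear_functional y /\ fv_continuous_functional y /\
  (forall f, ~ FV f -> y f = 0).

Definition delta (x : V) : Fn -> K := restrFV (fun f => ext 0 Om f x).

Definition dom_space : Prop :=
  fv_hausdorff /\ fv_directed /\ (forall x : Om, dual (delta (val x))).

Definition dual_nbhs (y : Fn -> K) (U : set (Fn -> K)) : Prop :=
  exists (n : nat) (A : 'I_n -> set Fn) (e : R), 0 < e /\
    (forall i, abs_convex (A i) /\ fv_compact (A i)) /\
    forall y', dual y' -> (forall i f, A i f -> nrm (y' f - y f) < e) -> U y'.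

Definition eps_prod (E : tvsType K) (u : (Fn -> K) -> E) : Prop :=
  (forall (a : K) y1 y2, dual y1 -> dual y2 ->
     u (fun f => a * y1 f + y2 f) = a *: u y1 + u y2) /\
  (forall y, dual y -> forall W : set E, nbhs (u y) W ->
     dual_nbhs y (fun y' => W (u y'))).

Definition Smap (E : tvsType K) (u : (Fn -> K) -> E) : Om -> E :=
  fun x => u (delta (val x)).

Definition incl_CWk_continuous (k : natinf) : Prop :=
  (forall f, FV f -> Ck Om k (ext (0 : K^o) Om f)) /\
  (forall f, FV f -> forall Kc : set V, compact Kc -> Kc `<=` Om ->
     forall m : nat, le_natinf m k -> forall e : R, 0 < e ->
       fv_nbhs f (fun g => forall (beta : 'I_d -> nat) (x : V),
          Kc x -> (mlen beta <= m)%N ->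
          nrm (pdb beta (ext (0 : K^o) Om (fsub g f)) x) < e)).

End FV.
End Defs.
Arguments ext {R d T} z Om f _.

Definition prop4_12_for (R : realType) (K : numFieldType) (iota : R -> K)
    (nrm : K -> R) : Prop :=
  forall (d : nat) (Om : set 'rV[R]_d) (k : natinf)
         (D : FVdata R K d Om) (E : tvsType K),
    open Om ->
    hausdorff_space E -> (exists e : E, e <> 0) ->
    FV_framework D -> dom_space nrm D ->
    incl_CWk_continuous iota nrm D k ->
    barrelled nrm D ->
    forall u : ((Om -> K) -> K) -> E, eps_prod nrm D u ->
      Ck iota Om k (ext 0 Om (Smap nrm D u)) /\
      forall (beta : 'I_d -> nat), le_natinf (mlen beta) k ->
        forall x : Om,
          pdb iota beta (ext 0 Om (Smap nrm D u)) (val x) =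
          u (restrFV nrm D
               (fun f => pdb iota beta (ext (0 : K^o) Om f) (val x))).
Arguments prop4_12_for R K iota nrm : clear implicits.

(* Main.v *)
Require Import Defs.
From HB Require Import structures.
From mathcomp Require Import all_boot all_order all_algebra.
From mathcomp Require Import all_classical all_reals all_analysis.
From mathcomp Require Import complex ring lra.
Import Order.TTheory GRing.Theory Num.Theory.
Import numFieldNormedType.Exports.
Local Open Scope ring_scope.
Local Open Scope classical_set_scope.
Section Words.
Context {R : realType} {K : numFieldType} (iota : R -> K) {d : nat}.
Local Notation V := 'rV[R]_d.

Definition Pw {W : tvsType K} (w : seq 'I_d) (F : V -> W) : V -> W :=
  foldr (fun n H => pd iota n H) F w.

Lemma Pw_cons {W : tvsType K} w n (F : V -> W) : Pw (n :: w) F = pd iota n (Pw w F).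
Proof. by []. Qed.

Lemma Pw_rcons {W : tvsType K} w n (F : V -> W) : Pw (rcons w n) F = Pw w (pd iota n F).
Proof. by rewrite /Pw foldr_rcons. Qed.

Definition wordOf (beta : 'I_d -> nat) : seq 'I_d :=
  flatten [seq nseq (beta i) i | i <- enum 'I_d].

Lemma Pw_nseq {W : tvsType K} n i (F : V -> W) : Pw (nseq n i) F = iter n (pd iota i) F.
Proof. by elim: n => //= n ->. Qed.

Lemma pdb_word {W : tvsType K} beta (F : V -> W) : pdb iota beta F = Pw (wordOf beta) F.
Proof.
rewrite /pdb /wordOf; elim: (enum 'I_d) => [|i s IH] //=.
by rewrite IH /Pw foldr_cat; elim: (beta i) => //= n ->.
Qed.

Lemma size_wordOf beta : size (wordOf beta) = mlen beta.
Proof.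
rewrite /wordOf size_flatten /shape -map_comp /mlen.
rewrite (eq_map (g := beta)); last by move=> i /=; rewrite size_nseq.
by rewrite sumnE big_map big_enum.
Qed.

Lemma CkP {W : tvsType K} (Om : set V) m (H : V -> W) : Ck_nat iota Om m H <->
  (forall w, (size w < m)%N -> forall n x, Om x -> exists v, has_pd iota n (Pw w H) x v) /\
  (forall w, size w = m -> {within Om, continuous (Pw w H)}).
Proof.
elim: m H => [|m IH] H /=.
  split.
    by move=> Hc; split => // w /size0nil ->.
  by move=> [_ Hc]; exact: (Hc [::] erefl).
split.
  move=> [Hp Hn]; split.
    move=> w; case/lastP: w => [|w n] Hs; first exact: Hp.
    rewrite size_rcons ltnS in Hs; rewrite Pw_rcons.
    exact: ((IH _).1 (Hn n)).1 w Hs.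
  move=> w; case/lastP: w => [|w n] //; rewrite size_rcons => -[Hs].
  rewrite Pw_rcons; exact: ((IH _).1 (Hn n)).2 w Hs.
move=> [Hp Hc]; split; first exact: (Hp [::]).
move=> n; apply/IH; split.
  move=> w Hs; rewrite -Pw_rcons; apply: Hp; by rewrite size_rcons ltnS.
by move=> w Hs; rewrite -Pw_rcons; apply: Hc; rewrite size_rcons Hs.
Qed.

Lemma pd_unique {W : tvsType K} (hW : hausdorff_space W) {n} {F : V -> W} {x v} :
  has_pd iota n F x v -> pd iota n F x = v.
Proof.
move=> Hv; rewrite /pd.
have Hx := xgetPex 0 (ex_intro (fun v => has_pd iota n F x v) v Hv).
exact: (cvg_unique hW Hx Hv).
Qed.

End Words.

Section Seqs.
Context {R : realType} {X : pseudoMetricType R}.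

Lemma within_seq (A : set X) (x : X) (P : X -> Prop) (r : R) : 0 < r ->
  (forall y : nat -> X, (forall j, A (y j) /\ ball x (r * harmonic j) (y j)) ->
     exists j, P (y j)) -> within A (nbhs x) P.
Proof.
move=> r0 H; apply: contrapT => HN.
have Hj : forall j : nat, exists z, A z /\ ball x (r * harmonic j) z /\ ~ P z.
  move=> j; apply: contrapT => Hn; apply: HN.
  rewrite /within /=; apply/nbhs_ballP; exists (r * harmonic j).
    by apply: mulr_gt0 => //; apply: harmonic_gt0.
  move=> z Hz Az; apply: contrapT => Pz; apply: Hn; by exists z.
have [y Hy] := choice Hj.
have [j Pj] := H y (fun j => conj (Hy j).1 (Hy j).2.1).
exact: (Hy j).2.2 Pj.
Qed.

Lemma seq_cvg {A : set X} {x : X} {y : nat -> X} {r : R} :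
  (forall j, A (y j) /\ ball x (r * harmonic j) (y j)) ->
  y @ \oo --> within A (nbhs x).
Proof.
move=> Hy P /= /nbhs_ballP [e e0 He].
have Hh : (fun j => r * harmonic j) @ \oo --> (r * 0 : R).
  exact: (cvgMl_tmp (@cvg_harmonic R)).
rewrite mulr0 in Hh.
have [N _ HN] := cvgr_dist_lt _ _ Hh _ e0.
exists N => // j /HN Hj.
apply: He; last exact: (Hy j).1.
apply: le_ball (Hy j).2; rewrite sub0r normrN in Hj.
by apply: ltW; apply: le_lt_trans Hj; apply: ler_norm.
Qed.

End Seqs.
Section FVfacts.
Variables (R : realType) (K : numFieldType) (nrm : K -> R).
Hypothesis nrm0 : nrm 0 = 0.
Hypothesis nrm_ge0 : forall a, 0 <= nrm a.
Hypothesis nrmD : forall a b, nrm (a + b) <= nrm a + nrm b.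
Hypothesis nrmM : forall a b, nrm (a * b) = nrm a * nrm b.
Hypothesis nrmN : forall a, nrm (- a) = nrm a.
Variables (d : nat) (Om : set 'rV[R]_d) (D : FVdata R K d Om).
Hypothesis Hfw : FV_framework D.
Local Notation Fn := (Om -> K).
Local Notation zf := (fun _ : Om => (0 : K)).
Local Notation Top := (@Top R K d Om D).
Local Notation nu := (@nu R K d Om D).
Local Notation snorm := (@snorm R K nrm d Om D).
Local Notation Jt := (@Jt R K d Om D).
Local Notation Mt := (@Mt R K d Om D).

Lemma lcomb00 : lcomb 1 zf zf = zf.
Proof. by apply/funext => x; rewrite /lcomb mulr0 addr0. Qed.

Lemma Top0 m : Top m zf = (fun _ => 0).
Proof.
have [_ [_ [_ [_ [_ [_ [domlin Tlin]]]]]]] := Hfw.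
have := Tlin m 1 zf zf (domlin m).1 (domlin m).1; rewrite lcomb00 => H.
apply/funext => x; have := congr1 (fun F => F x) H; rewrite /= mul1r.
by move/(congr1 (fun y => y - Top m zf x)); rewrite subrr addrK.
Qed.

Lemma FV_lcomb a {f g} : FV nrm D f -> FV nrm D g -> FV nrm D (lcomb a f g).
Proof.
have [_ [_ [_ [nuge0 [_ [APlin [domlin Tlin]]]]]]] := Hfw.
move=> [Af [Df Bf]] [Ag [Dg Bg]]; split; [|split].
- exact: APlin.2.
- by move=> m; apply: (domlin m).2.
move=> j m; have [Mf HMf] := Bf j m; have [Mg HMg] := Bg j m.
exists (nrm a * Mf + Mg) => _ [x _ <-]; rewrite Tlin //.
have h1 := HMf _ (imageT (fun x => nrm (Top m f x) * nu j m x) x).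
have h2 := HMg _ (imageT (fun x => nrm (Top m g x) * nu j m x) x).
apply: (le_trans (y := (nrm a * nrm (Top m f x) + nrm (Top m g x)) * nu j m x)).
  apply: ler_wpM2r; first exact: nuge0.
  by rewrite -nrmM; apply: nrmD.
rewrite mulrDl -mulrA; apply: lerD => //.
by apply: ler_wpM2l.
Qed.

Lemma FV0 : FV nrm D zf.
Proof.
have [_ [_ [_ [nuge0 [_ [APlin [domlin Tlin]]]]]]] := Hfw.
split; [exact: APlin.1|split; first by move=> m; exact: (domlin m).1].
move=> j m; exists 0 => _ [x _ <-]; by rewrite Top0 nrm0 mul0r.
Qed.

Lemma fsubE (g f : Fn) : fsub g f = lcomb (-1) f g.
Proof. by apply/funext => x; rewrite /fsub /lcomb mulN1r addrC. Qed.

Lemma FV_fsub {g f} : FV nrm D g -> FV nrm D f -> FV nrm D (fsub g f).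
Proof. by move=> Hg Hf; rewrite fsubE; apply: FV_lcomb. Qed.

Lemma scaleE a (f : Fn) : (fun x => a * f x) = lcomb a f zf.
Proof. by apply/funext => x; rewrite /lcomb addr0. Qed.

Lemma FV_scale a {f} : FV nrm D f -> FV nrm D (fun x => a * f x).
Proof. by move=> Hf; rewrite scaleE; apply: FV_lcomb => //; apply: FV0. Qed.

Lemma FV_comb2 a b {f g} : FV nrm D f -> FV nrm D g ->
  FV nrm D (fun x => a * f x + b * g x).
Proof.
move=> Hf Hg; rewrite (_ : (fun x => _) = lcomb a f (fun x => b * g x)) //.
by apply: FV_lcomb => //; apply: FV_scale.
Qed.

Lemma fsub_g0 (g : Fn) : fsub g zf = g.
Proof. by apply/funext => x; rewrite /fsub subr0. Qed.

Lemma snorm_ub f j m x : FV nrm D f ->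
  nrm (Top m f x) * nu j m x <= snorm j m f.
Proof.
move=> [_ [_ Bf]]; apply: sup_upper_bound; last exact: imageT.
split; last exact: Bf.
by exists (nrm (Top m f x) * nu j m x); apply: imageT.
Qed.

Lemma snorm_le f j m M : FV nrm D f ->
  (forall x, nrm (Top m f x) * nu j m x <= M) -> snorm j m f <= M.
Proof.
have [_ [_ [inhom _]]] := Hfw.
move=> Hf HM; apply: ge_sup.
  have [x0] := inhom m; by exists (nrm (Top m f x0) * nu j m x0); apply: imageT.
by move=> _ [x _ <-]; apply: HM.
Qed.

Lemma snorm_ge0 f j m : FV nrm D f -> 0 <= snorm j m f.
Proof.
have [_ [_ [inhom [nuge0 _]]]] := Hfw.
move=> Hf; have [x0] := inhom m; apply: le_trans (@snorm_ub f j m x0 Hf).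
by apply: mulr_ge0.
Qed.

Lemma snorm_tri {f g h} j m : FV nrm D f -> FV nrm D g -> FV nrm D h ->
  snorm j m (fsub h f) <= snorm j m (fsub h g) + snorm j m (fsub g f).
Proof.
have [_ [_ [_ [nuge0 [_ [APlin [domlin Tlin]]]]]]] := Hfw.
move=> Hf Hg Hh; apply: snorm_le; first exact: FV_fsub.
move=> x.
have E : fsub h f = lcomb 1 (fsub h g) (fsub g f).
  by apply/funext => y; rewrite /lcomb /fsub mul1r addrA subrK.
have [_ [D1 _]] := FV_fsub Hh Hg; have [_ [D2 _]] := FV_fsub Hg Hf.
rewrite E Tlin // mul1r.
apply: (le_trans (y := (nrm (Top m (fsub h g) x) + nrm (Top m (fsub g f) x)) * nu j m x)).
  by apply: ler_wpM2r; [apply: nuge0|apply: nrmD].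
rewrite mulrDl; apply: lerD; apply: snorm_ub; exact: FV_fsub.
Qed.

Lemma snorm_ff f j m : FV nrm D f -> snorm j m (fsub f f) = 0.
Proof.
move=> Hf; have E : fsub f f = zf by apply/funext => y; rewrite /fsub subrr.
apply/eqP; rewrite eq_le snorm_ge0 ?andbT; last exact: FV_fsub.
by rewrite E; apply: snorm_le; [exact: FV0| move=> x; rewrite Top0 nrm0 mul0r].
Qed.

Lemma fv_nbhsS {f} {U U' : set Fn} : fv_nbhs nrm D f U ->
  (forall g, FV nrm D g -> U g -> U' g) -> fv_nbhs nrm D f U'.
Proof.
move=> [n [F [e [e0 H]]]] HU; exists n, F, e; split => // g Hg Hs.
by apply: HU => //; apply: H.
Qed.

Lemma fv_nbhsI {f} {U U' : set Fn} : fv_nbhs nrm D f U -> fv_nbhs nrm D f U' ->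
  fv_nbhs nrm D f (fun g => U g /\ U' g).
Proof.
move=> [n1 [F1 [e1 [e10 H1]]]] [n2 [F2 [e2 [e20 H2]]]].
exists (n1 + n2)%N, (fun i : 'I_(n1 + n2) => match fintype.split i with inl a => F1 a | inr b => F2 b end).
exists (Order.min e1 e2); split; first by rewrite lt_min e10 e20.
move=> g Hg Hs; split.
  apply: H1 => // i; have := Hs (lshift n2 i).
  have -> : fintype.split (lshift n2 i) = inl i := unsplitK (inl i).
  by move=> /lt_le_trans; apply; rewrite ge_min lexx.
apply: H2 => // i; have := Hs (rshift n1 i).
have -> : fintype.split (rshift n1 i) = inr i := unsplitK (inr i).
by move=> /lt_le_trans; apply; rewrite ge_min lexx orbT.
Qed.

Lemma Ob_open {n} (F : 'I_n -> Jt * Mt) eta {f0} : 0 < eta -> FV nrm D f0 ->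
  fv_open nrm D (fun g => FV nrm D g /\
     forall i, snorm (F i).1 (F i).2 (fsub g f0) < eta).
Proof.
move=> eta0 Hf0 g Hg [_ Hlt].
pose M := \big[Order.max/0]_i snorm (F i).1 (F i).2 (fsub g f0).
have HM : M < eta by apply/bigmax_ltP; split.
exists n, F, (eta - M); split; first by rewrite subr_gt0.
move=> g' Hg' Hi; split => // i.
apply: (le_lt_trans (snorm_tri (F i).1 (F i).2 Hf0 Hg Hg')).
have := Hi i.
have : snorm (F i).1 (F i).2 (fsub g f0) <= M.
  rewrite /M; exact: le_bigmax.
lra.
Qed.

Lemma dual_zf y : dual nrm D y -> y zf = 0.
Proof.
move=> [Hl _]; have := Hl 1 zf zf FV0 FV0; rewrite lcomb00 mul1r.
by move/(congr1 (fun v => v - y zf)); rewrite subrr addrK.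
Qed.

Lemma dual_sub y g f : dual nrm D y -> FV nrm D g -> FV nrm D f ->
  y (fsub g f) = y g - y f.
Proof. by move=> [Hl _] Hg Hf; rewrite fsubE Hl // mulN1r addrC. Qed.

Lemma dual_scale y a f : dual nrm D y -> FV nrm D f ->
  y (fun x => a * f x) = a * y f.
Proof.
move=> Hy Hf; rewrite scaleE Hy.1 //; last exact: FV0.
by rewrite dual_zf // addr0.
Qed.

Lemma dual_comb2 y a b f g : dual nrm D y -> FV nrm D f -> FV nrm D g ->
  y (fun x => a * f x + b * g x) = a * y f + b * y g.
Proof.
move=> Hy Hf Hg; rewrite (_ : (fun x => _) = lcomb a f (fun x => b * g x)) //.
by rewrite Hy.1 //; [rewrite dual_scale | apply: FV_scale].
Qed.

Lemma dual_Z : dual nrm D (fun _ => 0).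
Proof.
have [[j0] [[m0] _]] := Hfw.
split; first by move=> a f g _ _; rewrite mulr0 addr0.
split => // f Hf e e0.
exists 0%N, (fun _ => (j0, m0)), 1; split => // g _ _.
by rewrite subrr nrm0.
Qed.

Lemma dual_comb a y1 y2 : dual nrm D y1 -> dual nrm D y2 ->
  dual nrm D (fun f => a * y1 f + y2 f).
Proof.
move=> [L1 [C1 Z1]] [L2 [C2 Z2]]; split.
  move=> b f g Hf Hg; rewrite L1 // L2 //; ring.
split; last by move=> f Hf; rewrite Z1 // Z2 // mulr0 addr0.
move=> f Hf e e0.
pose e1 := e / (2 * (nrm a + 1)).
have na0 := nrm_ge0 a.
have e10 : 0 < e1 by apply: divr_gt0 => //; lra.
have Ee1 : (nrm a + 1) * e1 = e / 2 by rewrite /e1; field; lra.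
have := fv_nbhsI (C1 f Hf e1 e10) (C2 f Hf (e / 2) ltac:(lra)).
move/fv_nbhsS; apply => g Hg [h1 h2].
have -> : a * y1 g + y2 g - (a * y1 f + y2 f) =
  a * (y1 g - y1 f) + (y2 g - y2 f) by ring.
apply: le_lt_trans (nrmD _ _) _; rewrite nrmM.
have : nrm a * nrm (y1 g - y1 f) <= (nrm a + 1) * e1.
  apply: ler_pM => //; [lra| exact: ltW].
lra.
Qed.

Hypothesis Hbar : barrelled nrm D.

Lemma equi {w : nat -> Fn -> K} : (forall j, dual nrm D (w j)) ->
  (forall f, FV nrm D f -> exists M, forall j, nrm (w j f) <= M) ->
  forall eps, 0 < eps -> exists n (F : 'I_n -> Jt * Mt) eta, 0 < eta /\
   forall g, FV nrm D g -> (forall i, snorm (F i).1 (F i).2 g < eta) ->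
     forall j, nrm (w j g) <= eps.
Proof.
move=> Hw Hb eps e0.
pose B := fun g => FV nrm D g /\ forall j, nrm (w j g) <= eps.
have HB : barrel nrm D B.
  split; first by move=> g [].
  split.
    split; first by move=> g [].
    move=> f Hf /= Hnb.
    have [j Hj] : exists j, eps < nrm (w j f).
      apply: contrapT => Hn; apply: Hnb; split => // j.
      rewrite leNgt; apply/negP => H; apply: Hn; by exists j.
    have [_ [Hc _]] := Hw j.
    have := Hc f Hf (nrm (w j f) - eps) ltac:(by rewrite subr_gt0).
    move/fv_nbhsS; apply => g Hg Hlt [_ HBg]; have := HBg j.
    have : nrm (w j f) <= nrm (- (w j g - w j f)) + nrm (w j g).
      by apply: le_trans (nrmD _ _); rewrite opprB subrK.
    rewrite nrmN; lra.
  split.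
    move=> f g a b [Hf Bf] [Hg Bg] Hab; split; first exact: FV_comb2.
    move=> j; rewrite dual_comb2 //.
    apply: le_trans (nrmD _ _) _; rewrite !nrmM.
    have := Bf j; have := Bg j; have := nrm_ge0 a; have := nrm_ge0 b.
    have := nrm_ge0 (w j f); have := nrm_ge0 (w j g); nra.
  move=> f Hf; have [M HM] := Hb f Hf.
  have M0 : 0 <= M by apply: le_trans (HM 0%N).
  exists (eps / (M + 1)); split; first by apply: divr_gt0 => //; lra.
  move=> a Ha; split; first exact: FV_scale.
  move=> j; rewrite dual_scale // nrmM.
  have Er : eps / (M + 1) * (M + 1) = eps by field; lra.
  have := HM j; have := nrm_ge0 a; have := nrm_ge0 (w j f).
  have : 0 <= eps / (M + 1) by apply: divr_ge0; lra.
  nra.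
have [n [F [eta [eta0 H]]]] := Hbar _ HB.
exists n, F, eta; split => // g Hg Hs j.
by have := H g Hg; rewrite fsub_g0 => /(_ Hs) [_]; apply.
Qed.

Lemma ev_bounded (s : nat -> R) N C : (forall j, (N <= j)%N -> s j <= C) ->
  exists M, forall j, s j <= M.
Proof.
move=> H; exists (Order.max C (\big[Order.max/0]_(i < N) s i)) => j.
case: (leqP N j) => hj; first by rewrite le_max H.
rewrite le_max; apply/orP; right.
exact: (@le_bigmax _ _ _ 0 (fun i : 'I_N => s i) (Ordinal hj)).
Qed.

Lemma UC (w : nat -> Fn -> K) : (forall j, dual nrm D (w j)) ->
  (forall f, FV nrm D f -> forall e, 0 < e -> \forall j \near \oo, nrm (w j f) < e) ->
  forall A, fv_compact nrm D A -> forall e, 0 < e ->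
  \forall j \near \oo, forall f, A f -> nrm (w j f) < e.
Proof.
move=> Hw Hpt A HA e e0.
have Hb : forall f, FV nrm D f -> exists M, forall j, nrm (w j f) <= M.
  move=> f Hf; have [N _ HN] := Hpt f Hf 1 ltr01.
  by apply: (@ev_bounded _ N 1) => j Hj; apply: ltW; apply: HN.
have [n [F [eta [eta0 Heq]]]] := equi Hw Hb (e / 3) ltac:(lra).
pose Ob f0 := fun g => FV nrm D g /\ forall i, snorm (F i).1 (F i).2 (fsub g f0) < eta.
pose G := fun O : set Fn => exists f0, A f0 /\ O = Ob f0.
have HGo : forall O, G O -> fv_open nrm D O.
  by move=> O [f0 [Af0 ->]]; apply: Ob_open => //; apply: HA.1.
have HGc : A `<=` \bigcup_(U in G) U.
  move=> f Af; have Hf := HA.1 _ Af; exists (Ob f); first by exists f.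
  by split => // i; rewrite snorm_ff.
have [N [s [Hs Hcov]]] := HA.2 G HGo HGc.
suff HH : \forall j \near \oo, forall l : 'I_N, forall g, s l g -> nrm (w j g) < e.
  apply: filterS HH => j Hj f Af; have [l _ Hl] := Hcov f Af; exact: Hj l f Hl.
apply: (@filter_forall nat 'I_N (fun l j => forall g, s l g -> nrm (w j g) < e)) => l; have [f0 [Af0 Hsl]] := Hs l.
have Hf0 := HA.1 _ Af0.
have e30 : 0 < e / 3 by lra.
suff Hl : \forall j \near \oo, forall g, s l g -> nrm (w j g) < e by exact: Hl.
move: (Hpt f0 Hf0 (e / 3) e30); apply: filterS => j h2 g; rewrite Hsl => -[Hg Hi].
have h1 : nrm (w j (fsub g f0)) <= e / 3 by apply: Heq => //; apply: FV_fsub.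
rewrite dual_sub // in h1.
have : nrm (w j g) <= nrm (w j g - w j f0) + nrm (w j f0).
  by apply: le_trans (nrmD _ _); rewrite subrK.
lra.
Qed.

Lemma BS (w : nat -> Fn -> K) (z : Fn -> K) : (forall j, dual nrm D (w j)) ->
  fv_linear_functional nrm D z -> (forall f, ~ FV nrm D f -> z f = 0) ->
  (forall f, FV nrm D f -> forall e, 0 < e -> \forall j \near \oo, nrm (w j f - z f) < e) ->
  dual nrm D z.
Proof.
move=> Hw Hl Hz Hpt; split => //; split => // f Hf e e0.
have Hb : forall f, FV nrm D f -> exists M, forall j, nrm (w j f) <= M.
  move=> g Hg; have [N _ HN] := Hpt g Hg 1 ltr01.
  apply: (@ev_bounded _ N (1 + nrm (z g))) => j Hj.
  have := HN j Hj.
  have : nrm (w j g) <= nrm (w j g - z g) + nrm (z g).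
    by apply: le_trans (nrmD _ _); rewrite subrK.
  lra.
have e20 : 0 < e / 2 by lra.
have [n [F [eta [eta0 Heq]]]] := equi Hw Hb (e / 2) e20.
exists n, F, eta; split => // g Hg Hs.
have Hh := FV_fsub Hg Hf.
have h1 := Heq _ Hh Hs.
have Ez : z (fsub g f) = z g - z f by rewrite fsubE Hl // mulN1r addrC.
have [j Hj] := filter_ex (Hpt _ Hh (e / 2) e20).
have := h1 j; rewrite -Ez.
have : nrm (z (fsub g f)) <= nrm (- (w j (fsub g f) - z (fsub g f))) + nrm (w j (fsub g f)).
  by apply: le_trans (nrmD _ _); rewrite opprB subrK.
rewrite nrmN; lra.
Qed.


Lemma dual_subf {y1 y2} : dual nrm D y1 -> dual nrm D y2 ->
  dual nrm D (fun f => y1 f - y2 f).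
Proof.
move=> H1 H2.
suff -> : (fun f => y1 f - y2 f) = (fun f => 1 * y1 f + ((-1) * y2 f + 0)).
  by apply: dual_comb => //; apply: dual_comb => //; apply: dual_Z.
by apply/funext => f; rewrite mul1r mulN1r addr0.
Qed.

Lemma UCd (w : nat -> Fn -> K) (z : Fn -> K) : (forall j, dual nrm D (w j)) ->
  dual nrm D z ->
  (forall f, FV nrm D f -> forall e, 0 < e -> \forall j \near \oo, nrm (w j f - z f) < e) ->
  forall A, fv_compact nrm D A -> forall e, 0 < e ->
  \forall j \near \oo, forall f, A f -> nrm (w j f - z f) < e.
Proof.
move=> Hw Hz Hpt A HA e e0.
have H1 := UC (fun j f => w j f - z f) (fun j => dual_subf (Hw j) Hz).
exact: (H1 Hpt A HA e e0).
Qed.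

Variable iota : R -> K.
Hypothesis nrm_cvg : forall (s : nat -> K^o) (v : K^o), s @ \oo --> v ->
   forall e : R, 0 < e -> \forall j \near \oo, nrm (s j - v) < e.
Hypothesis Hopen : open Om.
Hypothesis Hdom : dom_space nrm D.
Variable m : nat.
Hypothesis HCk : forall f, FV nrm D f -> Ck_nat iota Om m (ext (0 : K^o) Om f).

Local Notation V := 'rV[R]_d.
Definition Ef (f : Fn) : V -> K^o := ext (0 : K^o) Om f.
Definition Yw (w : seq 'I_d) (x : V) : Fn -> K :=
  restrFV nrm D (fun f => Pw iota w (Ef f) x).

Lemma restrFV_in y f : FV nrm D f -> restrFV nrm D y f = y f.
Proof. by rewrite /restrFV; case: pselect. Qed.

Lemma restrFV_out y f : ~ FV nrm D f -> restrFV nrm D y f = 0.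
Proof. by rewrite /restrFV; case: pselect. Qed.

Lemma ext_lcomb a f g x : Om x -> Ef (lcomb a f g) x = a * Ef f x + Ef g x.
Proof.
move=> Hx; rewrite /Ef /ext; case: pselect => // h.
by exfalso; apply: h; apply: mem_set.
Qed.

Lemma nearOm n {x} : Om x ->
  exists2 r : R, 0 < r & forall h : R, `|h| < r -> Om (x + h *: 'e_n).
Proof.
move=> Hx; have HO : nbhs x Om by move: Hopen; rewrite openE; apply.
case/nbhs_ballP: HO => r r0 Hr.
have e0 : 0 <= `|('e_n : V)| by [].
exists (r / (`|('e_n : V)| + 1)); first by apply: divr_gt0 => //; lra.
move=> h Hh; apply: Hr; rewrite -ball_normE /= opprD addrA subrr add0r normrN normrZ.
rewrite ltr_pdivlMr in Hh; last by lra.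
have := normr_ge0 h; nra.
Qed.

Lemma ball0R (e h : R) : ball (0 : R) e h = (`|h| < e).
Proof. by rewrite -ball_normE /= sub0r normrN. Qed.

Lemma hK : hausdorff_space (K^o).
Proof. exact: norm_hausdorff. Qed.

Lemma Pw_lin w a f g : (size w <= m)%N -> FV nrm D f -> FV nrm D g ->
  forall y, Om y -> Pw iota w (Ef (lcomb a f g)) y =
     a * Pw iota w (Ef f) y + Pw iota w (Ef g) y.
Proof.
move=> + Hf Hg; elim: w => [|n w IH] Hs y Hy; first exact: ext_lcomb.
have IH' := IH (ltnW Hs).
have [v1 Hv1] := ((CkP iota Om m (Ef f)).1 (HCk _ Hf)).1 w Hs n y Hy.
have [v2 Hv2] := ((CkP iota Om m (Ef g)).1 (HCk _ Hg)).1 w Hs n y Hy.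
have [r r0 Hr] := nearOm n Hy.
have Hl : has_pd iota n (Pw iota w (Ef (lcomb a f g))) y (a * v1 + v2).
  rewrite /has_pd.
  have Heq : \forall h \near 0^', a * dquot iota n (Pw iota w (Ef f)) y h
       + dquot iota n (Pw iota w (Ef g)) y h =
       dquot iota n (Pw iota w (Ef (lcomb a f g))) y h.
    apply/nbhs_ballP; exists r => // h /= Hh _.
    rewrite -ball_normE /= sub0r normrN in Hh.
    rewrite /dquot !IH' //; last exact: Hr.
    rewrite /GRing.scale /=; ring.
  apply: cvg_trans (near_eq_cvg Heq) _.
  apply: cvgD; last exact: Hv2.
  exact: cvgMl_tmp Hv1.
by rewrite !Pw_cons (pd_unique iota hK Hl) (pd_unique iota hK Hv1) (pd_unique iota hK Hv2).
Qed.

Definition qf (w : seq 'I_d) n (x : V) (h : R) : Fn -> K :=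
  fun f => (iota h)^-1 * Yw w (x + h *: 'e_n) f + ((- (iota h)^-1) * Yw w x f + 0).

Lemma q_dual {w n x h} : dual nrm D (Yw w (x + h *: 'e_n)) -> dual nrm D (Yw w x) ->
  dual nrm D (qf w n x h).
Proof.
by move=> H1 H2; apply: dual_comb => //; apply: dual_comb => //; apply: dual_Z.
Qed.

Lemma q_val w n x h f : FV nrm D f ->
  qf w n x h f = dquot iota n (Pw iota w (Ef f)) x h.
Proof.
move=> Hf; rewrite /qf /Yw !restrFV_in // /dquot /GRing.scale /=; ring.
Qed.

Lemma QJ {w n x} {h : nat -> R} : (size w < m)%N -> Om x ->
  h @ \oo --> (0 : R)^' ->
  forall f, FV nrm D f -> forall e, 0 < e ->
  \forall j \near \oo, nrm (qf w n x (h j) f - Yw (n :: w) x f) < e.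
Proof.
move=> Hs Hx Hh f Hf e e0.
have [v Hv] := ((CkP iota Om m (Ef f)).1 (HCk _ Hf)).1 w Hs n x Hx.
have EY : Yw (n :: w) x f = v by rewrite /Yw restrFV_in // Pw_cons (pd_unique iota hK Hv).
rewrite EY.
have Hc : (fun j => dquot iota n (Pw iota w (Ef f)) x (h j)) @ \oo --> v.
  exact: cvg_comp Hh Hv.
apply: filterS (nrm_cvg _ _ Hc _ e0) => j /=.
by rewrite q_val.
Qed.

Lemma harm_le1 j : harmonic j <= (1 : R).
Proof. by rewrite /harmonic invf_le1 // ler1n. Qed.

Definition hs (r : R) (j : nat) : R := r / 2 * harmonic j.

Lemma hseq {r : R} : 0 < r ->
  (forall j, hs r j != 0 /\ ball (0 : R) (r * harmonic j) (hs r j)) /\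
  (forall j, `|hs r j| < r).
Proof.
move=> r0; set h := hs r.
have hg := @harmonic_gt0 R; have hl := harm_le1.
have Ha : forall j, `|h j| = r / 2 * harmonic j.
  by move=> j; rewrite ger0_norm //; apply: mulr_ge0; [lra | apply: ltW].
split => j; last by rewrite Ha; have := hg j; have := hl j; nra.
split; first by rewrite /h mulf_neq0 //; [lra | apply: lt0r_neq0].
rewrite -ball_normE /= sub0r normrN Ha ltr_pM2r; [lra | exact: hg].
Qed.

Lemma Ydual {w} : (size w <= m)%N -> forall {x}, Om x -> dual nrm D (Yw w x).
Proof.
elim: w => [|n w IH] Hs x Hx.
  exact: (Hdom.2.2 (SigSub (mem_set Hx))).
have IH' := IH (ltnW Hs).
have [r r0 Hr] := nearOm n Hx.
have [Hb Hr'] := hseq r0.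
set h := hs r in Hb Hr'.
have Hcv : h @ \oo --> (0 : R)^' := seq_cvg (A := fun z : R => z != 0) Hb.
apply: (BS (fun j => qf w n x (h j))).
- move=> j; apply: q_dual; apply: IH' => //; exact: Hr.
- move=> a f g Hf Hg; rewrite /Yw !restrFV_in //; last exact: FV_lcomb.
  exact: Pw_lin.
- by move=> f Hf; rewrite /Yw restrFV_out.
- exact: QJ.
Qed.

Variables (E : tvsType K) (hE : hausdorff_space E) (u : (Fn -> K) -> E).
Hypothesis Hu : eps_prod nrm D u.
Definition G : V -> E := ext 0 Om (Smap nrm D u).

Lemma u0 : u (fun _ => 0) = 0.
Proof.
have H : u (fun f : Fn => (1 * 0 + 0 : K)) = 1 *: u (fun _ => 0) + u (fun _ => 0)
  := Hu.1 1 (fun _ => 0) (fun _ => 0) dual_Z dual_Z.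
move: H; rewrite (_ : (fun f : Fn => (1 * 0 + 0 : K)) = (fun _ => 0)); last first.
  by apply/funext => f; rewrite mulr0 addr0.
rewrite scale1r => /(congr1 (fun v => v - u (fun _ => 0))).
by rewrite subrr addrK.
Qed.

Lemma u_q w n x h : dual nrm D (Yw w (x + h *: 'e_n)) -> dual nrm D (Yw w x) ->
  u (qf w n x h) = (iota h)^-1 *: (u (Yw w (x + h *: 'e_n)) - u (Yw w x)).
Proof.
move=> H1 H2.
have D2 : dual nrm D (fun f => (- (iota h)^-1) * Yw w x f + (fun _ => 0) f).
  by apply: dual_comb => //; apply: dual_Z.
have E1 : u (qf w n x h) = (iota h)^-1 *: u (Yw w (x + h *: 'e_n)) +
   u (fun f => (- (iota h)^-1) * Yw w x f + (fun _ => 0) f) := Hu.1 _ _ _ H1 D2.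
have E2 : u (fun f => (- (iota h)^-1) * Yw w x f + (fun _ : Fn => 0) f) =
   (- (iota h)^-1) *: u (Yw w x) + u (fun _ => 0) := Hu.1 _ _ _ H2 dual_Z.
by rewrite E1 E2 u0 addr0 scaleNr scalerBr.
Qed.

Lemma HPD w n x : (size w < m)%N -> Om x ->
  (forall y, Om y -> Pw iota w G y = u (Yw w y)) ->
  has_pd iota n (Pw iota w G) x (u (Yw (n :: w) x)).
Proof.
move=> Hs Hx IH.
have [r r0 Hr] := nearOm n Hx.
have HY : forall y, Om y -> dual nrm D (Yw w y) := fun y Hy => Ydual (ltnW Hs) Hy.
have HY' : dual nrm D (Yw (n :: w) x) := Ydual (w := n :: w) Hs Hx.
move=> W /= HW.
apply: (@within_seq _ _ _ _ _ r) => // y Hy.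
have Hyr : forall j, `|y j| < r.
  move=> j; have [_ Hb] := Hy j; move: Hb; rewrite ball0R.
  move=> /lt_le_trans; apply; have := harm_le1 j; have := @harmonic_gt0 R j; nra.
have HyOm j : Om (x + y j *: 'e_n) := Hr _ (Hyr j).
have Hq : forall j, dual nrm D (qf w n x (y j)) :=
  fun j => q_dual (HY _ (HyOm j)) (HY _ Hx).
have Hcv : y @ \oo --> (0 : R)^' := seq_cvg (A := fun z : R => z != 0) Hy.
have Hpt := QJ (n := n) Hs Hx Hcv.
have [N [A [e [e0 [HA Himp]]]]] := Hu.2 _ HY' W HW.
have Hev : \forall j \near \oo, forall i f, A i f ->
    nrm (qf w n x (y j) f - Yw (n :: w) x f) < e.
  apply: (@filter_forall nat 'I_N (fun i j => forall f, A i f ->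
    nrm (qf w n x (y j) f - Yw (n :: w) x f) < e)) => i.
  suff Hl : \forall j \near \oo, forall f, A i f ->
    nrm (qf w n x (y j) f - Yw (n :: w) x f) < e by exact: Hl.
  have Hl2 := UCd (fun j => qf w n x (y j)) _ Hq HY'.
  have Hl3 := Hl2 Hpt.
  exact: (Hl3 _ (HA i).2 e e0).
have [j Hj] := filter_ex Hev.
exists j; have := Himp _ (Hq j) Hj.
rewrite (u_q w n x (y j) (HY _ (HyOm j)) (HY _ Hx)).
by rewrite /dquot /= !IH.
Qed.

Lemma main_eq {w} : (size w <= m)%N -> forall {x}, Om x -> Pw iota w G x = u (Yw w x).
Proof.
elim: w => [|n w IH] Hs x Hx.
  rewrite /= /G /ext; case: pselect => [h|h]; last by exfalso; apply: h; apply: mem_set.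
  by [].
rewrite Pw_cons; apply: pd_unique => //.
exact: HPD (IH (ltnW Hs)).
Qed.

Lemma Gcont w : size w = m -> {within Om, continuous (Pw iota w G)}.
Proof.
move=> Hs; have Hs' : (size w <= m)%N by rewrite Hs.
apply/subspace_continuousP => x Hx.
rewrite /from_subspace (main_eq Hs' Hx).
move=> W /= HW.
apply: (@within_seq _ _ _ _ _ 1) => // y Hy.
have Hcv := seq_cvg (A := Om) Hy.
have HYx := Ydual Hs' Hx.
have HYy : forall j, dual nrm D (Yw w (y j)) := fun j => Ydual Hs' (Hy j).1.
have Hpt : forall f, FV nrm D f -> forall e, 0 < e ->
    \forall j \near \oo, nrm (Yw w (y j) f - Yw w x f) < e.
  move=> f Hf e e0.
  have Hc1 := (((CkP iota Om m (Ef f)).1 (HCk _ Hf)).2 w Hs).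
  have Hc2 := (subspace_continuousP _ _).1 Hc1 x Hx.
  have Hc : (fun j => Pw iota w (Ef f) (y j)) @ \oo --> Pw iota w (Ef f) x.
    exact: cvg_comp Hcv Hc2.
  apply: filterS (nrm_cvg _ _ Hc _ e0) => j /=.
  by rewrite /Yw !restrFV_in.
have [N [A [e [e0 [HA Himp]]]]] := Hu.2 _ HYx W HW.
have Hev : \forall j \near \oo, forall i f, A i f ->
    nrm (Yw w (y j) f - Yw w x f) < e.
  apply: (@filter_forall nat 'I_N (fun i j => forall f, A i f ->
    nrm (Yw w (y j) f - Yw w x f) < e)) => i.
  suff Hl : \forall j \near \oo, forall f, A i f ->
    nrm (Yw w (y j) f - Yw w x f) < e by exact: Hl.
  exact: (UCd (fun j => Yw w (y j)) _ HYy HYx Hpt _ (HA i).2 e e0).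
have [j Hj] := filter_ex Hev.
exists j; have := Himp _ (HYy j) Hj.
by rewrite /preimage /= /from_subspace (main_eq Hs' (Hy j).1).
Qed.

Lemma main_m : Ck_nat iota Om m G /\
  forall beta, (mlen beta <= m)%N -> forall x, Om x ->
    pdb iota beta G x = u (restrFV nrm D (fun f => pdb iota beta (Ef f) x)).
Proof.
split.
  apply/CkP; split; last exact: Gcont.
  move=> w Hs n x Hx; exists (u (Yw (n :: w) x)).
  by apply: HPD => // y Hy; apply: main_eq => //; apply: ltnW.
move=> beta Hb x Hx.
rewrite pdb_word main_eq ?size_wordOf //.
rewrite /Yw; congr (u (restrFV nrm D _)); apply/funext => f.
by rewrite pdb_word.
Qed.

End FVfacts.

Lemma prop_gen (R : realType) (K : numFieldType) (iota : R -> K) (nrm : K -> R) :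
  nrm 0 = 0 -> (forall a, 0 <= nrm a) ->
  (forall a b, nrm (a + b) <= nrm a + nrm b) ->
  (forall a b, nrm (a * b) = nrm a * nrm b) ->
  (forall a, nrm (- a) = nrm a) ->
  (forall (s : nat -> K^o) (v : K^o), s @ \oo --> v ->
     forall e : R, 0 < e -> \forall j \near \oo, nrm (s j - v) < e) ->
  prop4_12_for R K iota nrm.
Proof.
move=> h0 h1 h2 h3 h4 hc.
move=> d Om k D E Hopen hE _ Hfw Hdom [Hinc _] Hbar u Hu.
have MM := fun m HCk => @main_m R K nrm h0 h1 h2 h3 h4 d Om D Hfw Hbar iota hc Hopen Hdom m HCk E hE u Hu.
case: k Hinc => [m0|] Hinc.
  have [HC Heq] := MM m0 Hinc.
  split; first exact: HC.
  move=> beta Hb x; exact: (Heq beta Hb (val x) (set_valP x)).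
split.
  by move=> m0; exact: (MM m0 (fun f Hf => Hinc f Hf m0)).1.
move=> beta _ x.
exact: ((MM (mlen beta) (fun f Hf => Hinc f Hf (mlen beta))).2 beta (leqnn _) (val x) (set_valP x)).
Qed.

Lemma ReD (R : rcfType) (x y : R[i]) : complex.Re (x + y) = complex.Re x + complex.Re y.
Proof. by case: x; case: y. Qed.

Lemma ReM (R : rcfType) (x y : R[i]) :
  complex.Re (x * y) = complex.Re x * complex.Re y - complex.Im x * complex.Im y.
Proof. by case: x; case: y. Qed.

Theorem proposition4p12 (R : realType) :
  prop4_12_for R R (fun r : R => r) (fun z : R => `|z|) /\
  prop4_12_for R R[i] (fun r : R => (r%:C)%C) (fun z : R[i] => complex.Re `|z|).
Proof.
split.
  apply: prop_gen.
  - exact: normr0.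
  - exact: normr_ge0.
  - exact: ler_normD.
  - exact: normrM.
  - exact: normrN.
  move=> s v Hs e e0.
  have [N _ HN] := cvgr_dist_lt _ _ Hs _ e0.
  by exists N => // j /HN; rewrite distrC.
apply: prop_gen.
- by rewrite normr0.
- move=> a; have := normr_ge0 a; rewrite lecE => /andP[_]; done.
- move=> a b; have := ler_normD a b; rewrite lecE => /andP[_]; by rewrite ReD.
- move=> a b; rewrite normrM ReM (ger0_Im (normr_ge0 a)) mul0r subr0; done.
- move=> a; by rewrite normrN.
move=> s v Hs e e0.
have e0' : (0 : R[i]) < (e%:C)%C by rewrite ltcR.
have [N _ HN] := cvgr_dist_lt _ _ Hs _ e0'.
by exists N => // j /HN; rewrite distrC ltcE => /andP[_].
Qed.
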